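(* Let $d\geq 2$ and $R\geq 1$ be integers and let $T_{d,R}$ be the rooted tree described below. Then the largest adjacency eigenvalue and the largest laplacian eigenvalue of $T_{d,R}$ are $$\alpha_{\max}=2\sqrt{d-1}\,\cos\frac{\pi}{R+2},\qquad \lambda_{\max}=d+2\sqrt{d-1}\,\cos\frac{\pi}{R+1}.$$
   Context: $T_{d,R}$ is the finite tree with a root vertex of degree $d-1$, all of whose pendant vertices (leaves) lie at distance exactly $R$ from the root, and all of whose remaining (intermediate) vertices have degree $d$. The adjacency eigenvalues are the eigenvalues of the adjacency matrix $A$; the laplacian eigenvalues are the eigenvalues of $L=\mathrm{diag}(\deg)-A$. *)

(* Defs.v *)
From HB Require Import structures.
From mathcomp Require Import all_boot all_order all_algebra.
Set Implicit Arguments. Unset Strict Implicit. Unset Printing Implicit Defensive.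
Import Order.TTheory GRing.Theory Num.Theory.
Local Open Scope ring_scope.

(* Vertices of T_{d,R}: words over the alphabet 'I_(d-1) of length k <= R.
   The empty word is the root; words of length R are the leaves. *)
Definition tvert (d R : nat) : finType := {k : 'I_R.+1 & k.-tuple 'I_(d.-1)}.

Definition tchild (d R : nat) (u v : tvert d R) : bool :=
  (val (tag v) == (val (tag u)).+1)%N &&
  (take (val (tag u)) (val (tagged v)) == val (tagged u)).

Definition tedge (d R : nat) (u v : tvert d R) : bool :=
  tchild u v || tchild v u.

Definition tdeg (d R : nat) (u : tvert d R) : nat := #|[set v | tedge u v]|.

Notation tN d R := #|tvert d R|.

Definition adjT (F : nzRingType) (d R : nat) : 'M[F]_(tN d R) :=
  \matrix_(i, j) (tedge (enum_val i) (enum_val j))%:R.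

Definition lapT (F : nzRingType) (d R : nat) : 'M[F]_(tN d R) :=
  \matrix_(i, j) ((i == j)%:R * (tdeg (enum_val i))%:R
                  - (tedge (enum_val i) (enum_val j))%:R).

Definition largest_eigenvalue (F : realFieldType) (n : nat) (M : 'M[F]_n) (a : F) :=
  eigenvalue M a /\ forall b, eigenvalue M b -> b <= a.

(* Main.v *)
Require Import Defs.
From HB Require Import structures.
From mathcomp Require Import all_boot all_order all_algebra.
From mathcomp Require Import all_classical all_reals all_analysis.
From mathcomp Require Import zify ring.
Import Order.TTheory GRing.Theory Num.Theory.
Local Open Scope ring_scope.
Set Implicit Arguments. Unset Strict Implicit.

Section Comb.
Variables (d R : nat).
Implicit Types u v : tvert d R.

Definition dep (u : tvert d R) : nat := val (tag u).

Lemma dep_le u : (dep u <= R)%N.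
Proof. by rewrite /dep -ltnS ltn_ord. Qed.

Lemma tchild_dep u v : tchild u v -> dep v = (dep u).+1.
Proof. by case/andP => /eqP. Qed.

Lemma tedge_sym u v : tedge u v = tedge v u.
Proof. by rewrite /tedge orbC. Qed.

Lemma tedge_split u v : tedge u v = tchild u v (+) tchild v u.
Proof.
rewrite /tedge; case h1: (tchild u v); case h2: (tchild v u) => //=.
move: (tchild_dep h1) (tchild_dep h2); lia.
Qed.

Lemma tedge_irr u : tedge u u = false.
Proof. rewrite /tedge orbb; apply/negP => /tchild_dep /eqP; by rewrite eqn_leq ltnn andbF. Qed.

Lemma tvert_eq (u v : tvert d R) : dep u = dep v -> val (tagged u) = val (tagged v) -> u = v.
Proof.
case: u => [[k hk] t]; case: v => [[k' hk'] t'] /= ek; rewrite /dep /= in ek.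
subst k'; rewrite (bool_irrelevance hk' hk) => et.
by congr existT; apply: val_inj.
Qed.

Lemma take_rc (T : Type) (t : seq T) c k : size t = k -> take k (rcons t c) = t.
Proof. by move=> <-; rewrite -cats1 take_size_cat. Qed.

Lemma children_card u : #|[pred v | tchild u v]| = if (dep u < R)%N then d.-1 else 0%N.
Proof.
case: u => [[k hk] t]; rewrite /dep /=.
case: ltnP => hkR; last first.
  apply: eq_card0 => v; rewrite inE; apply/negP => /tchild_dep.
  move: (dep_le v); rewrite /dep /= => + e; rewrite e; move: hkR; lia.
pose child (c : 'I_d.-1) : tvert d R :=
  existT (fun k : 'I_R.+1 => k.-tuple 'I_d.-1) (Ordinal (hkR : (k.+1 < R.+1)%N)) (rcons_tuple t c).
have inj : injective child.
  move=> c1 c2 /(congr1 (fun v : tvert d R => val (tagged v))) /=.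
  exact: rcons_injr.
rewrite -[in RHS](card_ord d.-1) -(card_imset _ inj).
apply: eq_card => v; rewrite inE; apply/idP/imsetP.
  case/andP => /eqP ev /eqP et.
  case: v ev et => [[k' hk'] t'] /= ek; subst k'.
  case: t' => [[|x s] /= hs] //= et.
  exists (last x s) => //.
  apply: tvert_eq => //=.
  rewrite lastI; congr rcons.
  by rewrite -et lastI take_rc // size_belast; move/eqP: hs => [].
case=> c _ ->; rewrite /tchild /= eqxx /=.
by rewrite take_rc // size_tuple.
Qed.
Lemma parent_card u : #|[pred v | tchild v u]| = (0 < dep u)%N.
Proof.
case: u => [[k hk] t]; rewrite /dep /=.
case: k hk t => [|k] hk t /=.
  apply: eq_card0 => v; rewrite inE; apply/negP => /tchild_dep.
  by rewrite /dep /=.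
have hk' : (k < R.+1)%N by apply: ltnW.
have hs : size (take k t) == k by rewrite size_take size_tuple ltnSn.
pose p : tvert d R :=
  existT (fun k : 'I_R.+1 => k.-tuple 'I_d.-1) (Ordinal hk') (Tuple hs).
apply: (@fintype.eq_card1 _ p) => v; rewrite inE /=; apply/idP/eqP.
  case/andP => /eqP /= ev /eqP et; apply: tvert_eq; rewrite /dep /=.
  by case: ev.
  rewrite -et. case: ev => e. move: (tval t) => s; by rewrite e.
move=> ev; rewrite ev /p /tchild /=; apply/andP; split => //.
Qed.
Lemma tedge_nat (K : nzRingType) u v :
  (tedge u v)%:R = (tchild u v)%:R + (tchild v u)%:R :> K.
Proof.
rewrite /tedge; case h1: (tchild u v); case h2: (tchild v u) => //=; rewrite ?addr0 ?add0r //.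
by move: (tchild_dep h1) (tchild_dep h2); lia.
Qed.

Lemma sum_pred_dep (K : nzRingType) (P : pred (tvert d R)) m (f : nat -> K) :
  (forall v, P v -> dep v = m) ->
  \sum_v (P v)%:R * f (dep v) = #|P|%:R * f m.
Proof.
move=> hP; rewrite (eq_bigr (fun v => (P v)%:R * f m)); last first.
  by move=> v _; case hv: (P v); rewrite ?mul0r // (hP v hv).
rewrite -mulr_suml -natr_sum; congr (_%:R * _).
rewrite -sum1_card [RHS]big_mkcond /=; apply: eq_bigr => v _; by rewrite unfold_in; case: (P v).
Qed.

Lemma nbr_sum (K : nzRingType) (f : nat -> K) u :
  \sum_v (tedge u v)%:R * f (dep v) =
  (0 < dep u)%:R * f (dep u).-1 + (dep u < R)%:R * (d.-1)%:R * f (dep u).+1.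
Proof.
rewrite (eq_bigr (fun v => (tchild v u)%:R * f (dep v) + (tchild u v)%:R * f (dep v))); last first.
  by move=> v _; rewrite tedge_nat mulrDl addrC.
rewrite big_split /=.
rewrite (@sum_pred_dep K [pred v | tchild v u] (dep u).-1); last first.
  by move=> v /tchild_dep ->.
rewrite (@sum_pred_dep K [pred v | tchild u v] (dep u).+1); last first.
  by move=> v /tchild_dep ->.
rewrite parent_card children_card; congr (_ + _).
by case: ltnP => _; rewrite ?mul1r ?mul0r.
Qed.
End Comb.
Set Implicit Arguments. Unset Strict Implicit.

Lemma cw_bound (K : realFieldType) n (M : 'M[K]_n) (x : 'I_n -> K) a :
  (forall i, 0 < x i) ->
  (forall j, M j j * x j + \sum_(i | i != j) x i * `|M i j| <= a * x j) ->
  forall b, eigenvalue M b -> b <= a.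
Proof.
move=> xpos hM b /eigenvalueP [v hv vnz].
have [j0 hj0] : exists j, v 0 j != 0.
  apply/existsP; apply: contraNT vnz; rewrite negb_exists => /forallP h.
  apply/eqP/matrixP => i j; rewrite (ord1 i) mxE; exact/eqP/negPn/h.
pose F j := `|v 0 j| / x j.
case: (@arg_maxP _ _ _ j0 predT F isT) => j _ Hj.
set r := F j in Hj.
have r0 : 0 < r.
  apply: lt_le_trans (Hj j0 isT); rewrite /F divr_gt0 // normr_gt0 //.
have vi i : `|v 0 i| <= r * x i.
  by rewrite -ler_pdivrMr //; exact: (Hj i isT).
have vj : `|v 0 j| = r * x j by rewrite /r /F divfK // gt_eqF.
have vjpos : 0 < `|v 0 j| by rewrite vj mulr_gt0.
have e : (b - M j j) * v 0 j = \sum_(i | i != j) v 0 i * M i j.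
  by have := congr1 (fun w : 'rV[K]_n => w 0 j) hv; rewrite !mxE (bigD1 j) //= => h; apply/eqP; rewrite mulrBl subr_eq -h addrC (mulrC (M j j)).
have h1 : `|b - M j j| * `|v 0 j| <= (a - M j j) * `|v 0 j|.
  rewrite -normrM e.
  apply: le_trans (ler_norm_sum _ _ _) _.
  apply: (@le_trans _ _ (\sum_(i | i != j) r * (x i * `|M i j|))).
    apply: ler_sum => i _; rewrite normrM mulrA ler_wpM2r //.
  rewrite -mulr_sumr vj mulrCA ler_wpM2l ?(ltW r0) //.
  by rewrite mulrBl lerBrDl; apply: hM.
rewrite ler_pM2r // in h1.
by rewrite -(lerD2r (- M j j)); apply: le_trans (ler_norm _) h1.
Qed.
Set Implicit Arguments. Unset Strict Implicit.

Section Trig.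
Variable K : realType.
Variable th : K.
Definition S (m : nat) := sin (m%:R * th).

Lemma S0 : S 0 = 0.
Proof. by rewrite /S mul0r sin0. Qed.

Lemma S_rec m : S m + S m.+2 = 2 * cos th * S m.+1.
Proof.
rewrite /S.
have -> : m.+2%:R * th = m.+1%:R * th + th by rewrite -addn1 natrD mulrDl mul1r.
have -> : m%:R * th = m.+1%:R * th - th by rewrite -addn1 natrD mulrDl mul1r addrK.
rewrite sinB sinD; ring.
Qed.

Lemma S_refl n m : n.+1%:R * th = pi -> (m <= n.+1)%N -> S (n.+1 - m) = S m.
Proof.
move=> hth hm; rewrite /S natrB // mulrBl hth sinB sinpi cospi; ring.
Qed.

Lemma S_pos n m : n%:R * th = pi -> (0 < m < n)%N -> 0 < S m.
Proof.
move=> hth /andP [m0 mn]; have th0 : 0 < th.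
  have n0 : (0 < n)%N by apply: leq_ltn_trans mn.
  by rewrite -(@pmulr_rgt0 _ n%:R) ?ltr0n // hth pi_gt0.
by apply: sin_gt0_pi; rewrite mulr_gt0 ?ltr0n //= -hth ltr_pM2r // ltr_nat mn.
Qed.

Lemma S_ge0 n m : n%:R * th = pi -> (m <= n)%N -> 0 <= S m.
Proof.
move=> hth mn; case: m mn => [|m] mn; first by rewrite S0.
rewrite leq_eqVlt in mn; case/orP: mn => [/eqP e|lt].
  by rewrite /S e hth sinpi.
by apply/ltW/(S_pos hth); rewrite lt.
Qed.
End Trig.
Section Rec.
Variable K : realType.
Variables (s th : K).
Hypothesis hs : 0 < s.
Let w k := s^-1 ^+ k.

Lemma adj_eq R k : R.+2%:R * th = pi -> (k <= R)%N ->
  (0 < k)%:R * (w k.-1 * S th k.-1.+1) + (k < R)%:R * s^+2 * (w k.+1 * S th k.+2)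
  = 2 * s * cos th * (w k * S th k.+1).
Proof.
move=> hth hk; have s0 : s != 0 by rewrite gt_eqF.
have -> : (k < R)%:R * s^+2 * (w k.+1 * S th k.+2) = s^+2 * (w k.+1 * S th k.+2).
  rewrite leq_eqVlt in hk; case/orP: hk => [/eqP ->|->]; last by rewrite mul1r.
  by rewrite /S hth sinpi !mulr0.
rewrite /w; case: k hk => [|k] hk.
  have := S_rec th 0; rewrite S0 add0r => ->.
  rewrite mul0r add0r expr1 expr0; field; done.
have := S_rec th k.+1 => /(canRL (addKr _)) ->.
rewrite mul1r !exprS /=; field; done.
Qed.

Let G k := s * S th k.+1 + S th k.

Lemma lap_eq R k : R.+1%:R * th = pi -> (1 <= R)%N -> (k <= R)%N ->
  ((0 < k)%:R + (k < R)%:R * s^+2) * (w k * G k)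
  + ((0 < k)%:R * (w k.-1 * G k.-1) + (k < R)%:R * s^+2 * (w k.+1 * G k.+1))
  = (s^+2 + 1 + 2 * s * cos th) * (w k * G k).
Proof.
move=> hth hR hk; have s0 : s != 0 by rewrite gt_eqF.
rewrite /G /w; case: k hk => [|k] hk.
  rewrite hR /=.
  have := S_rec th 0; rewrite S0 add0r => ->.
  rewrite !expr1 !expr0; field; done.
rewrite leq_eqVlt in hk; case/orP: hk => [/eqP ek|hk].
  subst R; rewrite ltnn /=.
  have e1 : S th k.+2 = 0 by rewrite /S hth sinpi.
  have e2 : S th k.+1 = S th 1 by rewrite -(S_refl hth (isT : (1 <= k.+2)%N)) subSS subn0.
  have e3 : S th k = 2 * cos th * S th 1.
    have := S_refl hth (hR : (2 <= k.+2)%N); rewrite subSS subSS subn0 => ->.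
    by have := S_rec th 0; rewrite S0 add0r.
  rewrite e1 e2 e3 !exprS; field; done.
rewrite hk /=.
have := S_rec th k.+1 => /(canRL (addKr _)) ->.
have := S_rec th k => /(canRL (addKr _)) ->.
rewrite !exprS; field; done.
Qed.
End Rec.

Section Main.
Variables (K : realType) (d R : nat).
Local Notation ev j := (enum_val (j : 'I_(tN d R)) : tvert d R).

Lemma sum_enum (F : tvert d R -> K) : \sum_(i < tN d R) F (enum_val i) = \sum_v F v.
Proof. by rewrite -big_enum_val. Qed.

Lemma tdeg_nat (u : tvert d R) : (tdeg u)%:R = (0 < dep u)%:R + (dep u < R)%:R * (d.-1)%:R :> K.
Proof.
have := nbr_sum (fun _ => 1 : K) u; rewrite !mulr1 => <-.
rewrite /tdeg cardsE -sum1_card natr_sum big_mkcond /=.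
by apply: eq_bigr => v _; rewrite mulr1 -topredE /= /tedge; case: (_ || _).
Qed.

Lemma nbr_enum (f : nat -> K) (j : 'I_(tN d R)) :
  \sum_(i < tN d R) f (dep (enum_val i)) * (tedge (enum_val i) (ev j))%:R =
  (0 < dep (ev j))%:R * f (dep (ev j)).-1 + (dep (ev j) < R)%:R * (d.-1)%:R * f (dep (ev j)).+1.
Proof.
rewrite (sum_enum (fun v => f (dep v) * (tedge v (ev j))%:R)) -nbr_sum.
by apply: eq_bigr => v _; rewrite tedge_sym mulrC.
Qed.

Lemma nbr_enum_off (f : nat -> K) (j : 'I_(tN d R)) :
  \sum_(i < tN d R | i != j) f (dep (enum_val i)) * (tedge (enum_val i) (ev j))%:R =
  (0 < dep (ev j))%:R * f (dep (ev j)).-1 + (dep (ev j) < R)%:R * (d.-1)%:R * f (dep (ev j)).+1.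
Proof. by rewrite -nbr_enum [RHS](bigD1 j) //= tedge_irr mulr0 add0r. Qed.

Lemma xpos_w (s : K) k : 0 < s -> 0 < s^-1 ^+ k.
Proof. by move=> hs; rewrite exprn_gt0 // invr_gt0. Qed.

Lemma root_ex : exists j : 'I_(tN d R), True.
Proof.
pose u0 : tvert d R := existT (fun k : 'I_R.+1 => k.-tuple 'I_d.-1) ord0 [tuple].
by exists (enum_rank u0).
Qed.

Lemma adj_part (s : K) (hs : 0 < s) (hs2 : s^+2 = (d.-1)%:R) (th : K) :
  R.+2%:R * th = pi ->
  largest_eigenvalue (adjT K d R) (2 * s * cos th).
Proof.
move=> hth.
pose xA k := s^-1 ^+ k * S th k.+1.
have xApos k : (k <= R)%N -> 0 < xA k.
  move=> hk; rewrite mulr_gt0 ?xpos_w //; apply: (S_pos hth); lia.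
have key j : \sum_(i < tN d R) xA (dep (enum_val i)) * (tedge (enum_val i) (ev j))%:R
   = 2 * s * cos th * xA (dep (ev j)).
  by rewrite nbr_enum -hs2 adj_eq // dep_le.
split.
  apply/eigenvalueP; exists (\row_i xA (dep (ev i))).
    apply/rowP => j; rewrite !mxE -key; apply: eq_bigr => i _; rewrite !mxE //.
  have [j _] := root_ex.
  apply/eqP => /rowP /(_ j); rewrite !mxE => /eqP; rewrite gt_eqF //; apply: xApos; exact: dep_le.
apply: (cw_bound (x := fun i => xA (dep (ev i)))); first by move=> i; apply: xApos; exact: dep_le.
move=> j; rewrite mxE tedge_irr mul0r add0r.
rewrite (eq_bigr (fun i => xA (dep (ev i)) * (tedge (ev i) (ev j))%:R)); last by move=> i _; rewrite mxE normr_nat.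
by rewrite nbr_enum_off -hs2 adj_eq // dep_le.
Qed.

Lemma lap_part (s : K) (hs : 0 < s) (hs2 : s^+2 = (d.-1)%:R) (hd : d%:R = s^+2 + 1)
  (th : K) : R.+1%:R * th = pi -> (1 <= R)%N ->
  largest_eigenvalue (lapT K d R) (d%:R + 2 * s * cos th).
Proof.
move=> hth hR.
pose g k := s^-1 ^+ k * (s * S th k.+1 + S th k).
have gpos k : (k <= R)%N -> 0 < g k.
  move=> hk; rewrite mulr_gt0 ?xpos_w //.
  case: k hk => [|k] hk.
    rewrite S0 addr0 mulr_gt0 //; apply: (S_pos hth); lia.
  apply: ltr_wpDl; first by apply: mulr_ge0; [exact: ltW | apply: (S_ge0 hth); lia].
  apply: (S_pos hth); lia.
have E k : (k <= R)%N ->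
  ((0 < k)%:R + (k < R)%:R * (d.-1)%:R) * g k
  + ((0 < k)%:R * g k.-1 + (k < R)%:R * (d.-1)%:R * g k.+1)
  = (d%:R + 2 * s * cos th) * g k.
  by move=> hk; rewrite -hs2 hd lap_eq.
split.
  apply/eigenvalueP; exists (\row_i ((-1) ^+ dep (ev i) * g (dep (ev i)))).
    apply/rowP => j; rewrite !mxE.
    under eq_bigr => i _ do rewrite !mxE mulrBr.
    rewrite sumrB (bigD1 j) //= eqxx mul1r big1 ?addr0; last first.
      by move=> i /negbTE ->; rewrite mul0r mulr0.
    rewrite (nbr_enum (fun k => (-1) ^+ k * g k)) tdeg_nat.
    have := E _ (dep_le (ev j)).
    case: (dep (ev j)) => [|k] /= /eqP; rewrite -subr_eq0 => /eqP e0;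
      apply/eqP; rewrite -subr_eq0; apply/eqP.
      by rewrite -[in RHS]e0; ring.
    by rewrite -[in RHS](mulr0 ((-1) ^+ k.+1)) -[in RHS]e0 !exprS; ring.
  have [j _] := root_ex.
  apply/eqP => /rowP /(_ j); rewrite !mxE => /eqP.
  rewrite mulf_eq0 signr_eq0 /= gt_eqF //; apply: gpos; exact: dep_le.
apply: (cw_bound (x := fun i => g (dep (ev i)))); first by move=> i; apply: gpos; exact: dep_le.
move=> j; rewrite mxE eqxx mul1r tedge_irr subr0 tdeg_nat.
rewrite (eq_bigr (fun i => g (dep (ev i)) * (tedge (ev i) (ev j))%:R)); last first.
  by move=> i /negbTE ij; rewrite mxE ij mul0r sub0r normrN normr_nat.
rewrite nbr_enum_off -(E _ (dep_le (ev j))) mulrC.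
by rewrite le_eqVlt eqxx.
Qed.
End Main.

Unset Implicit Arguments.
Set Strict Implicit.

Theorem mainTheorem19 (K : realType) (d R : nat) (hd : (2 <= d)%N) (hR : (1 <= R)%N) :
  largest_eigenvalue (adjT K d R)
    (2 * Num.sqrt (d%:R - 1) * cos (pi / (R%:R + 2))) /\
  largest_eigenvalue (lapT K d R)
    (d%:R + 2 * Num.sqrt (d%:R - 1) * cos (pi / (R%:R + 1))).
Proof.
have hd1 : (d.-1)%:R = d%:R - 1 :> K by rewrite -subn1 natrB // ltnW.
have hs : 0 < Num.sqrt (d%:R - 1 : K) by rewrite sqrtr_gt0 subr_gt0 ltr1n.
have hs2 : Num.sqrt (d%:R - 1 : K) ^+ 2 = (d.-1)%:R.
  by rewrite sqr_sqrtr ?hd1 // subr_ge0 ler1n ltnW.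
have hdd : d%:R = Num.sqrt (d%:R - 1 : K) ^+ 2 + 1 by rewrite hs2 hd1 subrK.
have e2 : R%:R + 2 = R.+2%:R :> K by rewrite -[in RHS]addn2 natrD.
have e1 : R%:R + 1 = R.+1%:R :> K by rewrite -[in RHS]addn1 natrD.
split.
  apply: adj_part => //; by rewrite e2 mulrC divfK // pnatr_eq0.
apply: lap_part => //; by rewrite e1 mulrC divfK // pnatr_eq0.
Qed.
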